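(* Let $(\mathcal P,\mathcal M,p)$ be an operational theory. Let $M_1,\dots,M_9\in\mathcal M$ be four-outcome measurements, with outcomes of $M_i$ labelled $k\in\{1,2,3,4\}$, and fix a bijection between the four outcomes of $M_i$ and the four labels in the $i$-th of the following sets: $L_1=\{1,2,3,4\}$, $L_2=\{4,5,6,7\}$, $L_3=\{7,8,9,10\}$, $L_4=\{10,11,12,13\}$, $L_5=\{13,14,15,16\}$, $L_6=\{16,17,18,1\}$, $L_7=\{18,2,9,11\}$, $L_8=\{3,5,12,14\}$, $L_9=\{6,8,15,17\}$ (each label $\kappa\in\{1,\dots,18\}$ occurs in exactly two of these sets). Suppose the eighteen operational equivalences $[k|M_i]\simeq[k'|M_{i'}]$ hold whenever outcome $k$ of $M_i$ and outcome $k'$ of $M_{i'}$ ($i\ne i'$) carry the same label. Let $P_{i,k}\in\mathcal P$, $i\in\{1,\dots,9\}$, $k\in\{1,\dots,4\}$, be thirty-six preparations, and let $P_i^{(\mathrm{ave})}$ be the preparation obtained by sampling $k$ uniformly from $\{1,2,3,4\}$ and implementing $P_{i,k}$; suppose $P_1^{(\mathrm{ave})}\simeq P_2^{(\mathrm{ave})}\simeq\cdots\simeq P_9^{(\mathrm{ave})}$. If the operational theory admits a universally noncontextual ontological model, then $$A\equiv\frac1{36}\sum_{i=1}^9\sum_{k=1}^4 p(k|M_i,P_{i,k})\le\frac56.$$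
   Context: An operational theory $(\mathcal P,\mathcal M,p)$ consists of preparations $\mathcal P$, measurements $\mathcal M$ (each $M$ with a finite outcome set $\mathcal K_M$) and probabilities $p(k|M,P)$ forming a distribution over $\mathcal K_M$. An ontological model $(\Lambda,\mu,\xi)$ consists of a set $\Lambda$ of ontic states, a probability distribution $\mu(\cdot|P)$ on $\Lambda$ for each $P$, and response functions $\xi(k|M,\lambda)\in[0,1]$ with $\sum_k\xi(k|M,\lambda)=1$, such that $p(k|M,P)=\sum_\lambda\xi(k|M,\lambda)\mu(\lambda|P)$. A preparation implemented by sampling $P_j$ with probability $w_j$ is represented by $\sum_j w_j\mu(\cdot|P_j)$. $[k|M]$ denotes the event of outcome $k$ of $M$. Events are operationally equivalent, $[k|M]\simeq[k'|M']$, if $p(k|M,P)=p(k'|M',P)$ for all $P\in\mathcal P$; preparations are operationally equivalent, $P\simeq P'$, if $p(k|M,P)=p(k|M,P')$ for all $M,k$. The model is measurement noncontextual if $[k|M]\simeq[k'|M']$ implies $\xi(k|M,\lambda)=\xi(k'|M',\lambda)$ for all $\lambda$, preparation noncontextual if $P\simeq P'$ implies $\mu(\cdot|P)=\mu(\cdot|P')$, and universally noncontextual if both hold. Outcome determinism is not assumed. *)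

(* Defs.v *)
From HB Require Import structures.
From mathcomp Require Import all_boot all_order all_algebra.
From mathcomp Require Import classical_sets boolp reals ereal esum.
Import Order.TTheory GRing.Theory Num.Theory.
Local Open Scope ring_scope.

Section OpTheory.
Variable R : realType.
Variables (Prep Meas : Type) (Out : Meas -> finType)
          (p : forall M : Meas, Out M -> Prep -> R).

Definition op_theory : Prop :=
  (forall M k P, 0 <= p M k P) /\ (forall M P, \sum_(k : Out M) p M k P = 1).

Definition event_equiv (M : Meas) (k : Out M) (M' : Meas) (k' : Out M') : Prop :=
  forall P : Prep, p M k P = p M' k' P.

Definition prep_equiv (P P' : Prep) : Prop :=
  forall (M : Meas) (k : Out M), p M k P = p M k P'.

Definition ont_model (L : choiceType) (mu : Prep -> L -> R)
    (xi : forall M : Meas, Out M -> L -> R) : Prop :=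
  [/\ (forall P l, 0 <= mu P l),
      (forall P, (\esum_(l in [set: L]) (mu P l)%:E)%E = 1%E),
      (forall M k l, 0 <= xi M k l <= 1),
      (forall M l, \sum_(k : Out M) xi M k l = 1) &
      (forall M k P, (\esum_(l in [set: L]) (xi M k l * mu P l)%:E)%E = (p M k P)%:E)].

Definition meas_noncontextual (L : choiceType)
    (xi : forall M : Meas, Out M -> L -> R) : Prop :=
  forall M k M' k', event_equiv M k M' k' -> forall l, xi M k l = xi M' k' l.

Definition prep_noncontextual (L : choiceType) (mu : Prep -> L -> R) : Prop :=
  forall P P', prep_equiv P P' -> mu P = mu P'.

Definition univ_noncontextual (L : choiceType) (mu : Prep -> L -> R)
    (xi : forall M : Meas, Out M -> L -> R) : Prop :=
  meas_noncontextual L xi /\ prep_noncontextual L mu.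

End OpTheory.

Arguments op_theory {R Prep Meas Out} p.
Arguments event_equiv {R Prep Meas Out} p M k M' k'.
Arguments prep_equiv {R Prep Meas Out} p P P'.
Arguments ont_model {R Prep Meas Out} p L mu xi.
Arguments meas_noncontextual {R Prep Meas Out} p L xi.
Arguments prep_noncontextual {R Prep Meas Out} p L mu.
Arguments univ_noncontextual {R Prep Meas Out} p L mu xi.

(* The label sets L_1..L_9 (labels 1..18 encoded as 0..17 in 'I_18). *)
Definition Lsets : seq (seq nat) :=
  [:: [:: 1; 2; 3; 4]; [:: 4; 5; 6; 7]; [:: 7; 8; 9; 10]; [:: 10; 11; 12; 13];
      [:: 13; 14; 15; 16]; [:: 16; 17; 18; 1]; [:: 18; 2; 9; 11];
      [:: 3; 5; 12; 14]; [:: 6; 8; 15; 17]]%N.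

Definition lbl (kappa : 'I_18) : nat := kappa.+1.

(* the i-th label set, i : 'I_9 (i = 0 is L_1) *)
Definition Lset (i : 'I_9) : seq nat := nth [::] Lsets i.

(* Main.v *)
Require Import Defs.
From HB Require Import structures.
From mathcomp Require Import all_boot all_order all_algebra.
From mathcomp Require Import classical_sets boolp reals ereal esum.
Import Order.TTheory GRing.Theory Num.Theory.

Definition ctxs : seq (nat * nat) := [:: (0, 5); (0, 6); (0, 7); (0, 1); (1, 7); (1, 8); (1, 2); (2, 8); (2, 6); (2, 3); (3, 6); (3, 7); (3, 4); (4, 7); (4, 8); (4, 5); (5, 8); (5, 6)]%N.
Definition cands : seq (seq nat) := [::
  [:: 1; 3; 3; 3; 5; 3; 5; 5; 5];
  [:: 1; 3; 5; 3; 3; 3; 5; 5; 5];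
  [:: 3; 3; 3; 5; 3; 1; 5; 5; 5];
  [:: 2; 2; 6; 0; 6; 2; 6; 6; 2];
  [:: 1; 5; 3; 5; 5; 5; 3; 3; 3];
  [:: 3; 5; 5; 1; 3; 5; 3; 5; 3];
  [:: 2; 2; 2; 6; 0; 6; 2; 6; 6];
  [:: 2; 6; 0; 6; 2; 2; 6; 2; 6];
  [:: 5; 3; 3; 1; 3; 3; 5; 5; 5];
  [:: 3; 5; 1; 5; 3; 5; 3; 5; 3];
  [:: 5; 5; 5; 3; 5; 1; 3; 3; 3];
  [:: 3; 1; 3; 3; 3; 5; 5; 5; 5];
  [:: 3; 5; 3; 3; 1; 3; 5; 5; 5];
  [:: 3; 3; 1; 3; 3; 5; 5; 5; 5];
  [:: 5; 1; 5; 5; 3; 5; 3; 3; 3];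
  [:: 3; 5; 3; 3; 3; 1; 5; 5; 5];
  [:: 5; 3; 5; 5; 5; 1; 3; 3; 3];
  [:: 1; 5; 5; 5; 3; 5; 3; 3; 3];
  [:: 3; 5; 3; 3; 3; 5; 5; 5; 1];
  [:: 3; 5; 3; 5; 1; 3; 5; 3; 5];
  [:: 5; 3; 3; 1; 5; 3; 5; 3; 5];
  [:: 3; 3; 3; 5; 3; 5; 1; 5; 5];
  [:: 2; 6; 6; 2; 6; 6; 2; 2; 0];
  [:: 3; 5; 3; 5; 3; 5; 5; 1; 3];
  [:: 3; 5; 5; 3; 3; 5; 1; 5; 3];
  [:: 5; 3; 5; 3; 5; 3; 1; 5; 3];
  [:: 5; 3; 5; 5; 5; 3; 3; 3; 1];
  [:: 5; 3; 3; 3; 5; 3; 5; 1; 5];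
  [:: 3; 5; 3; 5; 3; 5; 3; 1; 5];
  [:: 3; 1; 3; 5; 3; 3; 5; 5; 5];
  [:: 2; 2; 6; 1; 3; 2; 6; 5; 6];
  [:: 5; 2; 6; 5; 3; 3; 1; 3; 5];
  [:: 5; 3; 5; 3; 1; 5; 3; 5; 3];
  [:: 2; 2; 2; 3; 1; 6; 6; 5; 6];
  [:: 3; 3; 5; 3; 5; 3; 5; 5; 1];
  [:: 5; 3; 3; 5; 5; 3; 1; 3; 5];
  [:: 3; 2; 6; 3; 5; 5; 1; 5; 3];
  [:: 5; 5; 3; 5; 3; 5; 3; 3; 1];
  [:: 5; 3; 5; 3; 5; 3; 5; 1; 3];
  [:: 5; 1; 5; 3; 3; 3; 3; 5; 5];
  [:: 3; 5; 3; 1; 5; 5; 5; 3; 3];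
  [:: 5; 3; 1; 3; 5; 3; 5; 3; 5];
  [:: 5; 5; 1; 5; 5; 3; 3; 3; 3];
  [:: 5; 3; 5; 3; 5; 3; 3; 1; 5];
  [:: 5; 1; 5; 3; 5; 3; 5; 3; 3];
  [:: 5; 3; 5; 5; 1; 3; 3; 3; 5];
  [:: 2; 2; 5; 1; 3; 6; 3; 6; 5];
  [:: 2; 2; 6; 3; 1; 5; 5; 6; 3]]%N.
Definition cnts (cl : seq nat) : seq nat := foldr (fun a acc => incr_nth acc a) [::] cl.
Definition validc (cs : seq nat) (Y : seq nat) : bool :=
  [&& size Y == 9,
      all (fun k => let ab := nth (0, 0) ctxs k.-1 in
                    2 * nth 0 cs k + 4 <= nth 0 Y ab.1 + nth 0 Y ab.2) (iota 1 18)
    & sumn Y <= 33].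

Definition partner (i k : nat) : nat :=
  let ab := nth (0, 0) ctxs k.-1 in if ab.1 == i then ab.2 else ab.1.

Definition knownp (s : seq nat) : nat :=
  count (fun i => let a := nth 0 s i in let p := partner i a in
                  (p < size s) && (nth 0 s p != a)) (iota 0 (size s)).

Fixpoint chk (ls : seq (seq nat)) (acc : seq nat) : bool :=
  if 3 <= knownp (rev acc) then true else
  match ls with
  | [::] => has (validc (cnts (rev acc))) cands
  | l :: ls' => all (fun a => chk ls' (a :: acc)) l
  end.

Lemma big_check_ok : chk Lsets [::] = true. Proof. vm_compute. reflexivity. Qed.

Definition factG : bool :=
  all (fun k => let ab := nth (0, 0) ctxs k.-1 in
     [&& ab.1 < 9, ab.2 < 9, ab.1 != ab.2, k \in nth [::] Lsets ab.1,
         k \in nth [::] Lsets ab.2, partner ab.1 k == ab.2, partner ab.2 k == ab.1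
       & all (fun j => (k \in nth [::] Lsets j) ==> (j == ab.1) || (j == ab.2)) (iota 0 9)])
    (iota 1 18).

Lemma factG_ok : factG. Proof. by vm_compute. Qed.

Lemma count_sub_in (T : eqType) (s : seq T) (a1 a2 : pred T) :
  {in s, forall x, a1 x -> a2 x} -> count a1 s <= count a2 s.
Proof.
elim: s => [|y s IH] //= H.
rewrite leq_add //; last by apply: IH => z zs; apply: H; rewrite inE zs orbT.
by case: (boolP (a1 y)) => // /(H y (mem_head _ _)) ->.
Qed.

Lemma count_two (s : seq nat) (P : pred nat) a b : uniq s ->
  {in s, forall j, P j -> (j == a) || (j == b)} -> count P s <= P a + P b.
Proof.
move=> us H; rewrite -size_filter.
have -> : (P a + P b)%N = size (seq.filter P [:: a; b]).
  by rewrite /=; case: (P a); case: (P b).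
apply: uniq_leq_size; first exact: filter_uniq.
move=> j; rewrite mem_filter => /andP[pj js].
rewrite mem_filter pj /= !inE.
by have := H j js pj.
Qed.

Lemma knownp_cat s t : knownp s <= knownp (s ++ t).
Proof.
rewrite /knownp size_cat iotaD count_cat.
apply: leq_trans (leq_addr _ _).
apply: count_sub_in => i; rewrite mem_iota add0n => /andP[_ hi].
rewrite !nth_cat hi /= => /andP[hp hne].
by rewrite hp (leq_trans hp (leq_addr _ _)).
Qed.

Lemma chk_nil acc : chk [::] acc =
  if 3 <= knownp (rev acc) then true else has (validc (cnts (rev acc))) cands.
Proof. by []. Qed.
Lemma chk_cons l ls acc : chk (l :: ls) acc =
  if 3 <= knownp (rev acc) then true else all (fun a => chk ls (a :: acc)) l.
Proof. by []. Qed.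

Lemma chkP ls acc : chk ls acc ->
  forall s, size s = size ls -> (forall j, j < size ls -> nth 0 s j \in nth [::] ls j) ->
  (3 <= knownp (rev acc ++ s)) || has (validc (cnts (rev acc ++ s))) cands.
Proof.
elim: ls acc => [|l ls IH] acc.
  move=> H [|//] _ _; rewrite cats0; move: H; rewrite chk_nil.
  by case: ifP => // _ ->; rewrite orbT.
rewrite chk_cons; case: ifP => [hk _ s _ _|_].
  by rewrite (leq_trans hk (knownp_cat _ _)).
move=> /allP H [//|a s] [Hs] Hin.
have Ha : a \in l by apply: (Hin 0).
have := IH (a :: acc) (H a Ha) s Hs (fun j Hj => Hin j.+1 Hj).
by rewrite rev_cons cat_rcons.
Qed.

Lemma cnts_count cl k : nth 0 (cnts cl) k = count_mem k cl.
Proof. by elim: cl => [|a cl IH] /=; rewrite ?nth_nil // nth_incr_nth IH. Qed.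

Lemma Lsets_sub i : i < 9 -> {subset nth [::] Lsets i <= iota 1 18}.
Proof.
move=> Hi; have : all (fun l => all (fun a => a \in iota 1 18) l) Lsets by [].
by move=> /allP /(_ (nth [::] Lsets i)) /(_ (@mem_nth _ [::] Lsets i Hi)) /allP.
Qed.

Local Open Scope ring_scope.

Lemma sum_count (R : numDomainType) (s r : seq nat) (x : nat -> R) :
  uniq r -> {subset s <= r} ->
  \sum_(a <- s) x a = \sum_(k <- r) (count_mem k s)%:R * x k.
Proof.
move=> ur; elim: s => [|a s IH] sub.
  by rewrite big_nil big1 // => k _; rewrite mul0r.
have ar : a \in r by apply: sub; rewrite inE eqxx.
rewrite big_cons IH; last by move=> b hb; apply: sub; rewrite inE hb orbT.
under [in RHS]eq_bigr do rewrite /= natrD mulrDl.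
rewrite big_split /=; congr (_ + _).
rewrite (bigD1_seq a) //= eqxx mul1r big1 ?addr0 // => k hk.
by rewrite eq_sym (negPf hk) mul0r.
Qed.

From mathcomp Require Import ring lra.

Lemma ident (R : comRingType) (y x : nat -> R) :
  \sum_(k <- iota 1 18) (y (nth (0,0) ctxs k.-1).1 + y (nth (0,0) ctxs k.-1).2) * x k
  = \sum_(i <- iota 0 9) y i * \sum_(k <- nth [::] Lsets i) x k.
Proof. rewrite unlock /=. ring. Qed.

Lemma comb_key (R : realFieldType) (x : nat -> R) (c : nat -> nat) (y : nat -> R) :
  (forall k, 0 <= x k) ->
  (forall i, (i < 9)%N -> \sum_(k <- nth [::] Lsets i) x k = 1) ->
  (forall i, (i < 9)%N -> c i \in nth [::] Lsets i) ->
  (forall k, k \in iota 1 18 ->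
     (count_mem k (map c (iota 0 9)))%:R <=
       y (nth (0,0) ctxs k.-1).1 + y (nth (0,0) ctxs k.-1).2) ->
  \sum_(i <- iota 0 9) y i <= 15 / 2 ->
  \sum_(i <- iota 0 9) x (c i) <= 15 / 2.
Proof.
move=> x0 hs hc hk hy.
rewrite -(big_map c predT x) (@sum_count _ _ (iota 1 18) x) //; last first.
  move=> a /mapP[i]; rewrite mem_iota add0n => /andP[_ hi] ->.
  exact: Lsets_sub (hc i hi).
apply: (@le_trans _ _ (\sum_(k <- iota 1 18)
     (y (nth (0,0) ctxs k.-1).1 + y (nth (0,0) ctxs k.-1).2) * x k)).
  rewrite big_seq_cond [X in _ <= X]big_seq_cond; apply: ler_sum => k /andP[hk' _].
  by apply: ler_wpM2r; [exact: x0 | exact: hk].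
rewrite ident; apply: le_trans hy; rewrite le_eqVlt; apply/orP; left; apply/eqP.
rewrite big_seq [RHS]big_seq; apply: eq_bigr => i hi.
rewrite mem_iota add0n in hi; case/andP: hi => _ hi.
by rewrite hs // mulr1.
Qed.

Lemma comb (R : realFieldType) (x : nat -> R) (c : nat -> nat) :
  (forall k, 0 <= x k) ->
  (forall i, (i < 9)%N -> \sum_(k <- nth [::] Lsets i) x k = 1) ->
  (forall i, (i < 9)%N -> c i \in nth [::] Lsets i) ->
  \sum_(i <- iota 0 9) x (c i) <= 15 / 2.
Proof.
move=> x0 hs hc.
set cl := map c (iota 0 9).
have : (3 <= knownp cl)%N || has (validc (cnts cl)) cands.
  have := @chkP Lsets [::] big_check_ok cl; rewrite /=; apply.
    by [].
  move=> j hj; rewrite /cl (nth_map 0%N) ?size_iota // nth_iota // add0n.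
  exact: hc.
have G : forall k, k \in iota 1 18 ->
   let ab := nth (0, 0) ctxs k.-1 in
   [&& (ab.1 < 9)%N, (ab.2 < 9)%N, ab.1 != ab.2, k \in nth [::] Lsets ab.1,
       k \in nth [::] Lsets ab.2, partner ab.1 k == ab.2, partner ab.2 k == ab.1
     & all (fun j => (k \in nth [::] Lsets j) ==> (j == ab.1) || (j == ab.2)) (iota 0 9)].
  by move=> k hk; have := factG_ok; move/allP/(_ k hk).
case/orP => [hkn|/hasP[Y _ /and3P[/eqP sY /allP hk hsum]]]; last first.
  pose y i : R := 2^-1 * ((nth 0%N Y i)%:R - 2).
  apply: (@comb_key R x c y) => //.
    move=> k hk'.
    have := hk k hk'; rewrite cnts_count => h.
    move: (count_mem k cl) h => n h.
    have h' : ((2 * n + 4)%N%:R <= (nth 0%N Y (nth (0, 0) ctxs k.-1).1 + nth 0%N Y (nth (0, 0) ctxs k.-1).2)%N%:R :> R).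
      by rewrite ler_nat; exact: h.
    rewrite natrD natrM natrD in h'; rewrite /y; lra.
  rewrite /y.
  case: Y sY hsum {hk y} => [|y0 [|y1 [|y2 [|y3 [|y4 [|y5 [|y6 [|y7 [|y8 [|]]]]]]]]]] //= _ hsum.
  rewrite unlock /=.
  have : ((y0 + (y1 + (y2 + (y3 + (y4 + (y5 + (y6 + (y7 + (y8 + 0)))))))))%N%:R <= 33%:R :> R).
    by rewrite ler_nat.
  rewrite !natrD; lra.
pose cov i := c (partner i (c i)) == c i.
pose y i : R := if cov i then 1 else 2^-1.
have partner_lt : forall i, (i < 9)%N -> (partner i (c i) < 9)%N.
  move=> i hi; have hk := @Lsets_sub i hi _ (hc i hi).
  have := G _ hk; rewrite /partner /=.
  by case/and5P => h1 h2 _ _ _; case: ifP.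
apply: (@comb_key R x c y) => //.
  move=> k hk.
  have := G k hk; set a := (nth (0, 0) ctxs k.-1).1; set b := (nth (0, 0) ctxs k.-1).2.
  move=> /and5P[ha hb hab hka /and4P[hkb pa pb /allP hall]].
  have cnt : (count_mem k cl <= (c a == k) + (c b == k))%N.
    rewrite /cl count_map; apply: count_two; first exact: iota_uniq.
    move=> j; rewrite mem_iota add0n => /andP[_ hj] /eqP hcj.
    by apply: (implyP (hall j _)); [rewrite mem_iota add0n | rewrite -hcj; exact: hc].
  rewrite /y.
  case: (boolP ((c a == k) && (c b == k))) => [/andP[/eqP ca /eqP cb]|hn].
    have -> : cov a by rewrite /cov ca (eqP pa) cb.
    have -> : cov b by rewrite /cov cb (eqP pb) ca.
    have : ((count_mem k cl)%:R <= 2%:R :> R) by rewrite ler_nat (leq_trans cnt) // ca cb eqxx.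
    lra.
  have : ((count_mem k cl)%:R <= 1%:R :> R).
    by rewrite ler_nat (leq_trans cnt) //; move: hn; case: (c a == k); case: (c b == k).
  by case: (cov a); case: (cov b); lra.
have hc3 : (3 <= count (fun i => ~~ cov i) (iota 0 9))%N.
  apply: leq_trans hkn _; rewrite /knownp /cl size_map size_iota.
  apply: count_sub_in => i; rewrite mem_iota add0n => /andP[_ hi].
  rewrite (nth_map 0%N) ?size_iota // nth_iota // add0n.
  move=> /andP[_ hne]; have hp := partner_lt i hi.
  by rewrite (nth_map 0%N) ?size_iota // nth_iota // add0n in hne.
have ey i : y i = 1 - (~~ cov i : nat)%:R / 2.
  by rewrite /y; case: (cov i) => /=; lra.
under eq_bigr do rewrite ey.
move: hc3; rewrite -(ler_nat R) /= !natrD.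
rewrite unlock /=; lra.
Qed.


Theorem mainTheorem6 (R : realType) (Prep Meas : Type) (Out : Meas -> finType)
    (p : forall M : Meas, Out M -> Prep -> R)
    (hp : op_theory p)
    (M : 'I_9 -> Meas)
    (* outcome k in {1,..,4} of M_i (k encoded in 'I_4) *)
    (out : forall i : 'I_9, 'I_4 -> Out (M i))
    (out_bij : forall i, bijective (out i))
    (* the fixed bijection between outcomes of M_i and the labels of L_i *)
    (lab : forall i : 'I_9, Out (M i) -> 'I_18)
    (lab_inj : forall i, injective (lab i))
    (lab_in : forall i (o : Out (M i)), lbl (lab i o) \in Lset i)
    (* the eighteen operational equivalences *)
    (hequiv : forall (i i' : 'I_9) (o : Out (M i)) (o' : Out (M i')),
        i != i' -> lab i o = lab i' o' -> event_equiv p (M i) o (M i') o')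
    (P : 'I_9 -> 'I_4 -> Prep)
    (Pave : 'I_9 -> Prep)
    (* P_i^(ave) is implemented by sampling k uniformly and preparing P_{i,k} *)
    (hPave_op : forall i (N : Meas) (o : Out N),
        p N o (Pave i) = 4^-1 * \sum_(k < 4) p N o (P i k))
    (hPave_eq : forall i j : 'I_9, prep_equiv p (Pave i) (Pave j))
    (hUNC : exists (L : choiceType) (mu : Prep -> L -> R)
              (xi : forall N : Meas, Out N -> L -> R),
        [/\ ont_model p L mu xi, univ_noncontextual p L mu xi &
            (* the model represents the mixture P_i^(ave) as the mixture of
               the representations of the P_{i,k} *)
            forall i l, mu (Pave i) l = 4^-1 * \sum_(k < 4) mu (P i k) l]) :
  36^-1 * \sum_(i < 9) \sum_(k < 4) p (M i) (out i k) (P i k) <= 5 / 6 :> R.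
Proof.
case: hUNC => L [mu [xi [[mu0 musum xi01 xisum prep] [mnc pnc] hmix]]].
set nu := mu (Pave ord0).
have hnu i : mu (Pave i) = nu by apply: pnc; exact: hPave_eq.
have nu0 l : 0 <= nu l by exact: mu0.
have pw : forall l, \sum_(i < 9) \sum_(k < 4) xi (M i) (out i k) l * mu (P i k) l
                    <= 30 * nu l.
  move=> l.
  pose x (ka : nat) : R :=
    if [pick ik : 'I_9 * 'I_4 | lbl (lab ik.1 (out ik.1 ik.2)) == ka] is Some ik
    then xi (M ik.1) (out ik.1 ik.2) l else 0.
  have hx i k : x (lbl (lab i (out i k))) = xi (M i) (out i k) l.
    rewrite /x; case: pickP => [[i' k'] /= /eqP H|/(_ (i, k))]; last by rewrite eqxx.
    have H' : lab i' (out i' k') = lab i (out i k).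
      by apply/val_inj; move: H; rewrite /lbl => -[].
    case: (eqVneq i' i) => [ei|ne].
      subst i'; have ek : k' = k by apply: (bij_inj (out_bij i)); apply: (lab_inj i).
      by rewrite ek.
    exact: (mnc _ _ _ _ (hequiv i' i (out i' k') (out i k) ne H') l).
  have hx0 ka : 0 <= x ka.
    by rewrite /x; case: pickP => // ik _; case/andP: (xi01 (M ik.1) (out ik.1 ik.2) l).
  have hxs : forall n, (n < 9)%N -> \sum_(ka <- nth [::] Lsets n) x ka = 1.
    move=> n hn; pose i := Ordinal hn.
    pose f := fun k : 'I_4 => lbl (lab i (out i k)).
    have un : uniq [seq f k | k <- enum 'I_4].
      rewrite map_inj_uniq ?enum_uniq // => a b /succn_inj /val_inj /(lab_inj i).
      exact: (bij_inj (out_bij i)).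
    have sub : {subset [seq f k | k <- enum 'I_4] <= nth [::] Lsets n}.
      by move=> _ /mapP[k _ ->]; exact: lab_in.
    have sz : (size (nth [::] Lsets n) <= size [seq f k | k <- enum 'I_4])%N.
      rewrite size_map size_enum_ord.
      have : all (fun s => size s == 4%N) Lsets by [].
      by move=> /allP /(_ (nth [::] Lsets n)) /(_ (@mem_nth _ [::] Lsets n hn)) /eqP ->.
    have un2 : uniq (nth [::] Lsets n).
      have : all uniq Lsets by [].
      by move=> /allP /(_ (nth [::] Lsets n)) /(_ (@mem_nth _ [::] Lsets n hn)).
    have [_ eqm] := uniq_min_size un sub sz.
    have hperm := uniq_perm un un2 eqm.
    rewrite -(perm_big _ hperm) big_map big_enum /=.
    under eq_bigr do rewrite /f hx.
    rewrite -(xisum (M i) l) (reindex (out i)) //=.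
    exact: onW_bij.
  pose ks (i : 'I_9) : 'I_4 := [arg max_(k > ord0) xi (M i) (out i k) l]%O.
  have hks i k : xi (M i) (out i k) l <= xi (M i) (out i (ks i)) l.
    by rewrite /ks; case: arg_maxP => // j _ /(_ k isT).
  pose c (n : nat) : nat := lbl (lab (inord n) (out (inord n) (ks (inord n)))).
  have hc : forall n, (n < 9)%N -> c n \in nth [::] Lsets n.
    move=> n hn; have := lab_in (inord n) (out (inord n) (ks (inord n))).
    by rewrite /Lset inordK.
  have hcomb : \sum_(0 <= i < 9) x (c i) <= 15 / 2 := @comb R x c hx0 hxs hc.
  rewrite big_mkord in hcomb.
  have hmax : \sum_(i < 9) xi (M i) (out i (ks i)) l <= 15 / 2.
    by apply: le_trans hcomb; rewrite le_eqVlt; apply/orP; left; apply/eqP;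
       apply: eq_bigr => i _; rewrite /c inord_val hx.
  apply: (@le_trans _ _ (\sum_(i < 9) xi (M i) (out i (ks i)) l * (4 * nu l))).
    apply: ler_sum => i _.
    have e : \sum_(k < 4) mu (P i k) l = 4 * nu l.
      by rewrite -(hnu i) hmix mulrA divff ?mul1r.
    rewrite -e mulr_sumr; apply: ler_sum => k _.
    by apply: ler_wpM2r; [exact: mu0 | exact: hks].
  rewrite -mulr_suml.
  apply: (@le_trans _ _ (15 / 2 * (4 * nu l))).
    by apply: ler_wpM2r => //; rewrite mulr_ge0.
  have := nu0 l; lra.
suff S30 : \sum_(i < 9) \sum_(k < 4) p (M i) (out i k) (P i k) <= 30.
  lra.
rewrite -lee_fin -sumEFin.
under eq_bigr do rewrite -sumEFin.
under eq_bigr do under eq_bigr do rewrite -prep.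
have F0 : forall l i k, (0 <= (xi (M i) (out i k) l * mu (P i k) l)%:E)%E.
  move=> l i k; rewrite lee_fin; apply: mulr_ge0; last exact: mu0.
  by case/andP: (xi01 (M i) (out i k) l).
have -> : (\sum_(i < 9) \sum_(k < 4)
    \esum_(l in [set: L]) (xi (M i) (out i k) l * mu (P i k) l)%:E =
    \esum_(l in [set: L]) \sum_(i < 9) \sum_(k < 4) (xi (M i) (out i k) l * mu (P i k) l)%:E)%E.
  rewrite esum_sum; last by move=> l i _ _; rewrite sume_ge0.
  by apply: eq_bigr => i _; rewrite esum_sum.
have -> : (30%:E = \sum_(j < 30) \esum_(l in [set: L]) (nu l)%:E)%E.
  under eq_bigr do rewrite musum.
  by rewrite sumEFin sumr_const card_ord.
rewrite -esum_sum; last by move=> l j _ _; rewrite lee_fin.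
apply: le_esum => l _.
rewrite sumEFin; under eq_bigr do rewrite sumEFin.
rewrite sumEFin lee_fin sumr_const card_ord -mulr_natl.
exact: pw.
Qed.
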